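(* The monoid $\mathrm{Mon}(R)$ is a BF-monoid. Moreover: (1) $\mathrm{Mon}(R)$ is neither locally finitely generated nor transfer Krull; (2) $\mathcal U_k(\mathrm{Mon}(R))=\mathbb N_{\ge2}$ for all $k\ge2$; (3) $\mathsf L_{\mathrm{Mon}(R)}(\mathfrak a_k)=[2,k]$ for all $k\ge2$, where $\mathfrak a_k=\langle X,Y\rangle^k$; (4) $\mathrm{Mon}(R)$ is fully elastic.
   Context: Let $K$ be a field, $N\ge2$, $R=K[X_1,\dots,X_N]$, $X=X_1$, $Y=X_2$. $\mathrm{Mon}(R)$ is the monoid of nonzero monomial ideals of $R$ under ideal multiplication, with identity $R$ (its only unit). An atom of $\mathrm{Mon}(R)$ is an $I\ne R$ in $\mathrm{Mon}(R)$ not a product of two elements of $\mathrm{Mon}(R)\setminus\{R\}$. For a monoid $H$ (commutative, unit-cancellative) and $a\in H$, $\mathsf L_H(a)$ is the set of $k$ such that $a$ is a product of $k$ atoms, and $\mathcal L(H)=\{\mathsf L_H(a):a\in H\}$. $H$ is a BF-monoid if every $\mathsf L_H(a)$ is finite and nonempty. $\mathcal U_k(H)=\bigcup\{L\in\mathcal L(H):k\in L\}$. $H$ is locally finitely generated if for every $a\in H$ the smallest divisor-closed submonoid of $H$ containing $a$ is finitely generated up to units. A Krull monoid is a commutative cancellative monoid satisfying the ascending chain condition on divisorial ideals and completely integrally closed; a monoid homomorphism $\theta:H\to K'$ is a transfer homomorphism if $K'=\theta(H)K'^\times$, $\theta^{-1}(K'^\times)=H^\times$, and whenever $\theta(a)=\beta\gamma$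 there are $b,c\in H$ with $a=bc$, $\theta(b)\in\beta K'^\times$, $\theta(c)\in\gamma K'^\times$; $H$ is transfer Krull if there is a transfer homomorphism from $H$ to a Krull monoid. For a finite nonempty $L\subseteq\mathbb N$, $\rho(L)=\max L/\min L$ (with $\rho(\{0\})=1$), and $\rho(H)=\sup\{\rho(L):L\in\mathcal L(H)\}$; $H$ is fully elastic if for every rational $q$ with $1<q<\rho(H)$ there is $L\in\mathcal L(H)$ with $\rho(L)=q$. $[x,y]=\{z\in\mathbb Z:x\le z\le y\}$. *)

(* Defs.v *)
From HB Require Import structures.
From mathcomp Require Import all_boot all_order all_algebra.
From mathcomp Require Import mpoly.
From Stdlib Require Import ClassicalEpsilon.

Set Implicit Arguments.
Unset Strict Implicit.
Unset Printing Implicit Defensive.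

Import GRing.Theory.
Local Open Scope ring_scope.

Definition is_unit (T : Type) (op : T -> T -> T) (e : T) (u : T) : Prop :=
  exists v, op u v = e.

Definition mdvd (T : Type) (op : T -> T -> T) (b a : T) : Prop :=
  exists c, a = op b c.

Definition mpow (T : Type) (op : T -> T -> T) (e : T) (a : T) (n : nat) : T :=
  iter n (op a) e.

Definition mprod (T : Type) (op : T -> T -> T) (e : T) (s : seq T) : T :=
  foldr op e s.

Definition is_atom (T : Type) (op : T -> T -> T) (e : T) (a : T) : Prop :=
  ~ is_unit op e a /\
  forall b c, a = op b c -> is_unit op e b \/ is_unit op e c.

Definition Lset (T : Type) (op : T -> T -> T) (e : T) (a : T) (k : nat) : Prop :=
  exists s : seq T, size s = k /\ (forall x, List.In x s -> is_atom op e x) /\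
                    a = mprod op e s.

Definition BF_monoid (T : Type) (op : T -> T -> T) (e : T) : Prop :=
  forall a, (exists k, Lset op e a k) /\ (exists n, forall k, Lset op e a k -> k <= n)%N.

(* U_k(H) = union of all L in L(H) with k in L *)
Definition Uset (T : Type) (op : T -> T -> T) (e : T) (k m : nat) : Prop :=
  exists a, Lset op e a k /\ Lset op e a m.

Definition rho_of (mn mx : nat) : rat :=
  if mn == 0%N then 1 else (mx%:R / mn%:R).

Definition rhoL (T : Type) (op : T -> T -> T) (e : T) (a : T) (q : rat) : Prop :=
  exists mn mx : nat,
    Lset op e a mn /\ (forall k, Lset op e a k -> mn <= k)%N /\
    Lset op e a mx /\ (forall k, Lset op e a k -> k <= mx)%N /\
    q = rho_of mn mx.

(* q < rho(H) = sup { rho(L) : L in L(H) }  iff  some rho(L) exceeds q *)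
Definition lt_rhoH (T : Type) (op : T -> T -> T) (e : T) (q : rat) : Prop :=
  exists a r, rhoL op e a r /\ q < r.

Definition fully_elastic (T : Type) (op : T -> T -> T) (e : T) : Prop :=
  forall q : rat, 1 < q -> lt_rhoH op e q -> exists a, rhoL op e a q.

Definition is_submonoid (T : Type) (op : T -> T -> T) (e : T) (S : T -> Prop) : Prop :=
  S e /\ forall a b, S a -> S b -> S (op a b).

Definition divisor_closed (T : Type) (op : T -> T -> T) (S : T -> Prop) : Prop :=
  forall a b c, S a -> a = op b c -> S b.

Definition dc_gen (T : Type) (op : T -> T -> T) (e : T) (a : T) (x : T) : Prop :=
  forall S, is_submonoid op e S -> divisor_closed op S -> S a -> S x.

Definition fin_gen_up_to_units (T : Type) (op : T -> T -> T) (e : T)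
    (S : T -> Prop) : Prop :=
  exists E : seq T, (forall x, List.In x E -> S x) /\
    forall s, S s -> exists u (l : seq T),
      S u /\ (exists v, S v /\ op u v = e) /\
      (forall x, List.In x l -> List.In x E) /\ s = op u (mprod op e l).

Definition loc_fin_gen (T : Type) (op : T -> T -> T) (e : T) : Prop :=
  forall a, fin_gen_up_to_units op e (dc_gen op e a).

Definition is_cmonoid (T : Type) (op : T -> T -> T) (e : T) : Prop :=
  (forall a b c, op a (op b c) = op (op a b) c) /\
  (forall a b, op a b = op b a) /\ (forall a, op e a = a).

Definition cancellative (T : Type) (op : T -> T -> T) : Prop :=
  forall a b c, op a b = op a c -> b = c.

(* Elements of the quotient group q(H) are written a/b with a, b in H.
   For X subset of H:  (H : X) = { a/b : b | a y for all y in X },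
   and  X_v = (H : (H : X)), so z in X_v iff  b | a z  for all a/b in (H : X). *)
Definition vclos (T : Type) (op : T -> T -> T) (X : T -> Prop) (z : T) : Prop :=
  forall a b, (forall y, X y -> mdvd op b (op a y)) -> mdvd op b (op a z).

Definition divisorial (T : Type) (op : T -> T -> T) (A : T -> Prop) : Prop :=
  forall z, A z <-> vclos op A z.

Definition ACC_divisorial (T : Type) (op : T -> T -> T) : Prop :=
  forall A : nat -> T -> Prop,
    (forall n, divisorial op (A n)) ->
    (forall n z, A n z -> A n.+1 z) ->
    exists n, forall m, (n <= m)%N -> forall z, A m z <-> A n z.

(* completely integrally closed: every x = a/b in q(H) which is almost
   integral (c x^n in H for all n, some c in H) lies in H *)
Definition compl_int_closed (T : Type) (op : T -> T -> T) (e : T) : Prop :=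
  forall a b c, (forall n, mdvd op (mpow op e b n) (op c (mpow op e a n))) ->
                mdvd op b a.

Definition is_Krull (T : Type) (op : T -> T -> T) (e : T) : Prop :=
  is_cmonoid op e /\ cancellative op /\ ACC_divisorial op /\ compl_int_closed op e.

Definition is_transfer_hom (T : Type) (op : T -> T -> T) (e : T)
    (T' : Type) (op' : T' -> T' -> T') (e' : T') (th : T -> T') : Prop :=
  th e = e' /\ (forall a b, th (op a b) = op' (th a) (th b)) /\
  (forall y, exists a u, is_unit op' e' u /\ y = op' (th a) u) /\
  (forall a, is_unit op' e' (th a) <-> is_unit op e a) /\
  (forall a beta gamma, th a = op' beta gamma ->
     exists b c, a = op b c /\
       (exists u, is_unit op' e' u /\ th b = op' beta u) /\
       (exists u, is_unit op' e' u /\ th c = op' gamma u)).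

Definition transfer_Krull (T : Type) (op : T -> T -> T) (e : T) : Prop :=
  exists (T' : Type) (op' : T' -> T' -> T') (e' : T') (th : T -> T'),
    is_Krull op' e' /\ is_transfer_hom op e op' e' th.

Section MonR.
Variables (K : fieldType) (N : nat).

Definition is_ideal (I : {mpoly K[N]} -> Prop) : Prop :=
  I 0 /\ (forall p q, I p -> I q -> I (p + q)) /\ (forall r p, I p -> I (r * p)).

Definition ideal_gen (S : {mpoly K[N]} -> Prop) (p : {mpoly K[N]}) : Prop :=
  forall I, is_ideal I -> (forall q, S q -> I q) -> I p.

Definition is_monomial (p : {mpoly K[N]}) : Prop :=
  exists m : 'X_{1..N}, p = 'X_[m].

Definition monomial_ideal (I : {mpoly K[N]} -> Prop) : Prop :=
  exists S, (forall q, S q -> is_monomial q) /\ forall p, I p <-> ideal_gen S p.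

Definition nonzero_ideal (I : {mpoly K[N]} -> Prop) : Prop :=
  exists p, I p /\ p != 0.

Definition is_MonR (I : {mpoly K[N]} -> Prop) : Prop :=
  monomial_ideal I /\ nonzero_ideal I.

Definition MonR : Type := {I : {mpoly K[N]} -> Prop | is_MonR I}.

Lemma is_MonR_full : is_MonR (fun _ => True).
Proof.
split; last by exists 1; split=> //; exact: oner_neq0.
exists (fun q => q = 'X_[0%MM]); split; first by move=> q ->; exists 0%MM.
move=> p; split=> // _ I [_ [_ HI]] HS.
have H1 := HS _ erefl; rewrite mpolyX0 in H1.
by rewrite -(mulr1 p); apply: HI.
Qed.

Definition mon_one : MonR := exist _ (fun _ => True) is_MonR_full.

(* an ideal, viewed as an element of Mon(R); for ideals that are nonzero
   monomial ideals (the only case used) this is the ideal itself *)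
Definition to_mon (I : {mpoly K[N]} -> Prop) : MonR :=
  match excluded_middle_informative (is_MonR I) with
  | left h => exist _ I h
  | right _ => mon_one
  end.

Definition ideal_mul (I J : {mpoly K[N]} -> Prop) : {mpoly K[N]} -> Prop :=
  ideal_gen (fun p => exists f g, I f /\ J g /\ p = f * g).

Definition mon_mul (A B : MonR) : MonR := to_mon (ideal_mul (sval A) (sval B)).

(* the ideal <X, Y> = <X_1, X_2> (variables indexed 0 and 1 here) *)
Definition ideal_XY : MonR :=
  to_mon (ideal_gen (fun p => exists i : 'I_N, (val i < 2)%N /\ p = 'X_i)).

Definition a_k (k : nat) : MonR := mpow mon_mul mon_one ideal_XY k.

End MonR.

(* Main.v *)
Require Import Defs.
From mathcomp Require Import all_boot all_order all_algebra.
From mathcomp Require Import mpoly.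
From mathcomp Require Import zify.
From Stdlib Require Import ClassicalEpsilon Classical FunctionalExtensionality PropExtensionality ProofIrrelevance.

Import GRing.Theory.
Set Implicit Arguments.
Unset Strict Implicit.
Unset Printing Implicit Defensive.

Section Bridge.
Variables (K : fieldType) (N : nat).
Local Open Scope ring_scope.
Local Notation poly := {mpoly K[N]}.
Local Notation mon := 'X_{1..N}.
Local Notation M := (MonR K N).
Local Notation one := (mon_one K N).

Lemma ideal_gen_ideal (S : poly -> Prop) : is_ideal (ideal_gen S).
Proof.
split; [by move=> I [? _] _|split].
- by move=> p q Hp Hq I HI HS; case: (HI) => _ [HD _]; apply: HD; [exact: Hp|exact: Hq].
- by move=> r p Hp I HI HS; case: (HI) => _ [_ HM]; apply: HM; exact: Hp.
Qed.

Lemma ideal_gen_incl (S : poly -> Prop) q : S q -> ideal_gen S q.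
Proof. by move=> Sq I _ HS; apply: HS. Qed.

Lemma ideal_gen_min (S T : poly -> Prop) : is_ideal T -> (forall q, S q -> T q) ->
  forall p, ideal_gen S p -> T p.
Proof. by move=> HT HS p Hp; apply: Hp. Qed.

Lemma ideal_gen_mono (S1 S2 : poly -> Prop) : (forall q, S1 q -> ideal_gen S2 q) ->
  forall p, ideal_gen S1 p -> ideal_gen S2 p.
Proof. move=> H; apply: ideal_gen_min => //; exact: ideal_gen_ideal. Qed.

Lemma ideal_sum (J : poly -> Prop) (Ty : eqType) (r : seq Ty) (F : Ty -> poly) :
  is_ideal J -> (forall x, x \in r -> J (F x)) -> J (\sum_(x <- r) F x).
Proof.
move=> [H0 [HD _]]; elim: r => [|x r IH] H; first by rewrite big_nil.
rewrite big_cons; apply: HD; first by apply: H; rewrite inE eqxx.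
by apply: IH => y hy; apply: H; rewrite inE hy orbT.
Qed.

Definition upS (S : mon -> Prop) (m : mon) := exists s, S s /\ (s <= m)%MM.
Definition genX (S : mon -> Prop) : poly -> Prop := fun q => exists s, S s /\ q = 'X_[s].
Definition suppIn (V : mon -> Prop) (p : poly) := forall m, m \in msupp p -> V m.

Lemma msupp_zero : msupp (0 : poly) = [::].
Proof. by rewrite -mpolyC0 msupp0. Qed.

Lemma K_lemma (S : mon -> Prop) p : ideal_gen (genX S) p <-> suppIn (upS S) p.
Proof.
split.
- apply: ideal_gen_min; last first.
    move=> q [s [Ss ->]] m; rewrite msuppX inE => /eqP ->.
    by exists s; split => //; exact: lepm_refl.
  split; [|split].
  + by move=> m; rewrite msupp_zero.
  + move=> p1 p2 H1 H2 m /msuppD_le; rewrite mem_cat => /orP [/H1|/H2] //.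
  + move=> r q Hq m /msuppM_le /allpairsP [[m1 m2] [/= _ h2 ->]].
    have [s [Ss le]] := Hq _ h2; exists s; split => //.
    exact: (lepm_trans le (lem_addl _ _)).
- move=> H; rewrite (mpolyE p); apply: ideal_sum; first exact: ideal_gen_ideal.
  move=> m /H [s [Ss le]].
  rewrite -mul_mpolyC -(submK le) mpolyXD mulrA.
  case: (ideal_gen_ideal (genX S)) => _ [_ HM]; apply: HM.
  by apply: ideal_gen_incl; exists s.
Qed.


Definition UI (A : M) : mon -> Prop := fun m => sval A 'X_[m].

Lemma genX_monomials (S0 : poly -> Prop) : (forall q, S0 q -> is_monomial q) ->
  forall p, ideal_gen S0 p <-> ideal_gen (genX (fun s => S0 'X_[s])) p.
Proof.
move=> HS p; split; apply: ideal_gen_mono => q.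
- move=> Sq; apply: ideal_gen_incl; have [m hm] := HS _ Sq.
  by exists m; split => //; rewrite -hm.
- by move=> [s [Ss ->]]; apply: ideal_gen_incl.
Qed.

Lemma MonR_char (A : M) : exists S, forall p, sval A p <-> ideal_gen (genX S) p.
Proof.
case: A => P [[S0 [HS0 HP]] _] /=.
exists (fun s => S0 'X_[s]) => p; rewrite HP; exact: genX_monomials.
Qed.

Lemma UI_spec (A : M) p : sval A p <-> suppIn (UI A) p.
Proof.
have [S HS] := MonR_char A.
have E : forall m, UI A m <-> upS S m.
  move=> m; rewrite /UI HS K_lemma; split.
  - by move=> h; apply: h; rewrite msuppX inE.
  - by move=> h m'; rewrite msuppX inE => /eqP ->.
rewrite HS K_lemma; split => h m hm; apply/E; exact: h.
Qed.

Lemma UI_up (A : M) m m' : UI A m -> (m <= m')%MM -> UI A m'.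
Proof.
have [S HS] := MonR_char A.
rewrite /UI !HS !K_lemma => h le m2; rewrite msuppX inE => /eqP ->.
have [s [Ss le2]] := h m ltac:(by rewrite msuppX mem_head).
by exists s; split => //; exact: lepm_trans le2 le.
Qed.

Lemma UI_ne (A : M) : exists m, UI A m.
Proof.
case: A => P hP; have [p [Pp pnz]] := proj2 hP.
have : msupp p != [::] by rewrite msupp_eq0.
case E: (msupp p) => [|m s] // _.
exists m; have := (UI_spec (exist _ P hP) p).1 Pp; apply; rewrite E mem_head //.
Qed.

Lemma MonR_eq (A B : M) : (forall m, UI A m <-> UI B m) -> A = B.
Proof.
move=> H.
have E : sval A = sval B.
  apply: functional_extensionality => p; apply: propositional_extensionality.
  rewrite !UI_spec; split => h m hm; apply/H; exact: h.
case: A B H E => [PA hA] [PB hB] /= _ E; subst PB.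
by rewrite (proof_irrelevance _ hA hB).
Qed.

Lemma to_mon_val (P : poly -> Prop) (h : is_MonR P) : sval (to_mon P) = P.
Proof. by rewrite /to_mon; case: excluded_middle_informative. Qed.

Lemma X_neq0 (m : mon) : ('X_[m] : poly) != 0.
Proof.
apply/eqP => h; have := @mcoeffX N K m m; rewrite h mcoeff0 eqxx => /esym/eqP.
by rewrite oner_eq0.
Qed.

Lemma isMonR_gen (S : mon -> Prop) : (exists m, S m) -> is_MonR (ideal_gen (genX S)).
Proof.
move=> [m Sm]; split.
- exists (genX S); split => //; by move=> q [s [_ ->]]; exists s.
- exists 'X_[m]; split; [apply: ideal_gen_incl; by exists m|exact: X_neq0].
Qed.

Definition mkg (S : mon -> Prop) : M := to_mon (ideal_gen (genX S)).

Lemma UI_mkg (S : mon -> Prop) : (exists m, S m) -> forall m, UI (mkg S) m <-> upS S m.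
Proof.
move=> hS m; rewrite /UI /mkg to_mon_val; last exact: isMonR_gen.
rewrite K_lemma; split.
- by move=> h; apply: h; rewrite msuppX inE.
- by move=> h m'; rewrite msuppX inE => /eqP ->.
Qed.

Definition upset (U : mon -> Prop) :=
  (forall m m', U m -> (m <= m')%MM -> U m') /\ exists m, U m.

Lemma UI_mk (U : mon -> Prop) : upset U -> forall m, UI (mkg U) m <-> U m.
Proof.
move=> [Hup Hne] m; rewrite UI_mkg //; split.
- by move=> [s [Us le]]; exact: Hup Us le.
- by move=> Um; exists m; split => //; exact: lepm_refl.
Qed.

Definition sumset (U V : mon -> Prop) (m : mon) := exists a b, U a /\ V b /\ m = (a + b)%MM.

Lemma UI_mul (A B : M) m : UI (mon_mul A B) m <-> sumset (UI A) (UI B) m.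
Proof.
have [a Ha] := UI_ne A; have [b Hb] := UI_ne B.
have ne : exists m, sumset (UI A) (UI B) m by exists (a + b)%MM, a, b.
have E : ideal_mul (sval A) (sval B) = ideal_gen (genX (sumset (UI A) (UI B))).
  apply: functional_extensionality => p; apply: propositional_extensionality; split.
  - apply: ideal_gen_mono => q [f [g [Af [Bg ->]]]].
    apply/K_lemma => m' /msuppM_le /allpairsP [[m1 m2] [/= h1 h2 ->]].
    exists (m1 + m2)%MM; split; last exact: lepm_refl.
    exists m1, m2; split; first exact: (UI_spec A f).1 Af m1 h1.
    split => //; exact: (UI_spec B g).1 Bg m2 h2.
  - apply: ideal_gen_mono => q [s [[a' [b' [Ha' [Hb' ->]]]] ->]].
    apply: ideal_gen_incl; exists 'X_[a'], 'X_[b']; do 2 split => //.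
    exact: mpolyXD.
rewrite /mon_mul E -/(mkg _) UI_mkg //; split.
- move=> [s [[a' [b' [Ha' [Hb' ->]]]] le]].
  exists a', (b' + (m - (a' + b')))%MM; split => //; split.
    by apply: UI_up Hb' _; exact: lem_addr.
  by rewrite addmA addmC submK.
- by move=> h; exists m; split => //; exact: lepm_refl.
Qed.

Lemma UI_one m : UI one m.
Proof. by []. Qed.

Lemma mulC (A B : M) : mon_mul A B = mon_mul B A.
Proof.
apply: MonR_eq => m; rewrite !UI_mul.
by split => -[a [b [? [? ->]]]]; exists b, a; rewrite addmC.
Qed.

Lemma mulA (A B C : M) : mon_mul A (mon_mul B C) = mon_mul (mon_mul A B) C.
Proof.
apply: MonR_eq => m; rewrite !UI_mul; split.
- move=> [a [x [Ha [/UI_mul [b [c [Hb [Hc ->]]]] ->]]]].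
  exists (a + b)%MM, c; split; first by apply/UI_mul; exists a, b.
  by split => //; rewrite addmA.
- move=> [x [c [/UI_mul [a [b [Ha [Hb ->]]]] [Hc ->]]]].
  exists a, (b + c)%MM; split => //; split; last by rewrite addmA.
  by apply/UI_mul; exists b, c.
Qed.

Lemma mul1 (A : M) : mon_mul one A = A.
Proof.
apply: MonR_eq => m; rewrite UI_mul; split.
- move=> [a [b [_ [Hb ->]]]]; apply: UI_up Hb _; exact: lem_addl.
- by move=> h; exists 0%MM, m; rewrite add0m.
Qed.

Lemma mul1r (A : M) : mon_mul A one = A.
Proof. by rewrite mulC mul1. Qed.


Local Notation mul := (@mon_mul K N).
Local Notation mprodM := (mprod mul one).

Lemma mprod_cat (s1 s2 : seq M) : mprodM (s1 ++ s2) = mul (mprodM s1) (mprodM s2).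
Proof. by elim: s1 => [|x s IH] /=; [rewrite mul1|rewrite IH mulA]. Qed.

Lemma UI0_one (A : M) : UI A 0%MM -> A = one.
Proof.
move=> h; apply: MonR_eq => m; split => // _; apply: UI_up h _.
by apply/mnm_lepP => i; rewrite mnm0E.
Qed.

Lemma UI_mul0 (A B : M) : UI (mul A B) 0%MM <-> UI A 0%MM /\ UI B 0%MM.
Proof.
rewrite UI_mul; split.
- move=> [a [b [Ha [Hb /esym/eqP]]]]; rewrite mnmD_eq0 => /andP [/eqP ea /eqP eb].
  by subst.
- by move=> [Ha Hb]; exists 0%MM, 0%MM; rewrite addm0.
Qed.

Lemma unit_iff (A : M) : is_unit mul one A <-> UI A 0%MM.
Proof.
split.
- move=> [v hv]; have H : UI (mul A v) 0%MM by rewrite hv.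
  by case/UI_mul0: H.
- by move=> h; exists one; rewrite (UI0_one h) mul1.
Qed.

Lemma atom_nonunit (A : M) : is_atom mul one A -> ~ UI A 0%MM.
Proof. by move=> [h _] /unit_iff. Qed.

Lemma atom_deg1 (A : M) x : ~ UI A 0%MM -> UI A x -> mdeg x = 1%N -> is_atom mul one A.
Proof.
move=> nu Ax dx; split; first by move/unit_iff.
move=> b c E; move: Ax; rewrite E UI_mul => -[mb [mc [Hb [Hc ex]]]].
move: dx; rewrite ex mdegD => dx.
have [h|h] : mdeg mb = 0%N \/ mdeg mc = 0%N by lia.
- left; apply/unit_iff; move/eqP: h; rewrite mdeg_eq0 => /eqP <- //.
- right; apply/unit_iff; move/eqP: h; rewrite mdeg_eq0 => /eqP <- //.
Qed.

Lemma mprod_deg (s : seq M) : (forall x, List.In x s -> ~ UI x 0%MM) ->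
  forall m, UI (mprodM s) m -> (size s <= mdeg m)%N.
Proof.
elim: s => [|x s IH] //= H m; rewrite UI_mul => -[a [b [Ha [Hb ->]]]].
rewrite mdegD.
have : mdeg a != 0%N.
  rewrite mdeg_eq0; apply/eqP => ea; subst a; exact: (H x (or_introl erefl)).
have := IH (fun y hy => H y (or_intror hy)) b Hb; lia.
Qed.

Lemma mprod_nonunit (s : seq M) : (forall x, List.In x s -> ~ UI x 0%MM) ->
  s <> [::] -> ~ UI (mprodM s) 0%MM.
Proof.
move=> H ne h; have := mprod_deg H h; rewrite mdeg0; case: s ne {H h} => //.
Qed.

Lemma fact_exists n : forall (A : M) m, UI A m -> (mdeg m <= n)%N -> exists k, Lset mul one A k.
Proof.
elim: n => [|n IH] A m Am dm.
  have : m = 0%MM by apply/eqP; rewrite -mdeg_eq0; lia.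
  move=> em; subst m; exists 0%N, [::]; split => //; split => //.
  by rewrite (UI0_one Am).
case: (classic (UI A 0%MM)) => [A0|nA0].
  by exists 0%N, [::]; split => //; split => //; rewrite (UI0_one A0).
case: (classic (is_atom mul one A)) => [at1|nat1].
  by exists 1%N, [:: A]; split => //; split; [move=> x [<-|[]]|rewrite /= mul1r].
have : exists b c, A = mul b c /\ ~ is_unit mul one b /\ ~ is_unit mul one c.
  apply: NNPP => H; apply: nat1; split; first by move/unit_iff.
  move=> b c E; apply: NNPP => H2; apply: H; exists b, c; split => //.
  by split => H3; apply: H2; [left|right].
move=> [b [c [E [nb nc]]]].
move: Am; rewrite E UI_mul => -[mb [mc [Hb [Hc ex]]]].
have db : mdeg mb != 0%N.
  by rewrite mdeg_eq0; apply/eqP => e; subst mb; apply: nb; apply/unit_iff.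
have dc : mdeg mc != 0%N.
  by rewrite mdeg_eq0; apply/eqP => e; subst mc; apply: nc; apply/unit_iff.
move: dm; rewrite ex mdegD => dm.
have [kb [sb [_ [Hsb Eb]]]] := IH b mb Hb ltac:(lia).
have [kc [sc [_ [Hsc Ec]]]] := IH c mc Hc ltac:(lia).
exists (size (sb ++ sc)), (sb ++ sc); split => //; split.
  by move=> x hx; case: (List.in_app_or _ _ _ hx) => [/Hsb|/Hsc].
by rewrite mprod_cat -Eb -Ec.
Qed.

Lemma BF : BF_monoid mul one.
Proof.
move=> A; have [m Am] := UI_ne A; split; first exact: fact_exists Am (leqnn _).
exists (mdeg m) => k [s [<- [Hs E]]].
apply: (mprod_deg (fun x hx => atom_nonunit (Hs x hx))); by rewrite -E.
Qed.


Hypothesis hN : (2 <= N)%N.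

Definition i0 : 'I_N := Ordinal (leq_trans (isT : (1 <= 2)%N) hN).
Definition i1 : 'I_N := Ordinal hN.

Lemma i01 : i0 != i1. Proof. by []. Qed.

Definition vec2 (a b : nat) : mon :=
  [multinom (if i == i0 then a else if i == i1 then b else 0%N) | i < N].

Lemma vec2_0 a b : vec2 a b i0 = a. Proof. by rewrite mnmE eqxx. Qed.
Lemma vec2_1 a b : vec2 a b i1 = b. Proof. by rewrite mnmE. Qed.
Lemma vec2_o a b j : j != i0 -> j != i1 -> vec2 a b j = 0%N.
Proof. by move=> h0 h1; rewrite mnmE (negbTE h0) (negbTE h1). Qed.

Lemma vec2_00 : vec2 0 0 = 0%MM.
Proof.
apply/mnmP => j; rewrite mnm0E mnmE.
by case: (j == i0); case: (j == i1).
Qed.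

Lemma vec2_add a b c d : (vec2 a b + vec2 c d)%MM = vec2 (a + c) (b + d).
Proof.
apply/mnmP => j; rewrite mnmDE !mnmE.
by case: (j == i0); case: (j == i1).
Qed.

Lemma mdeg_vec2 a b : mdeg (vec2 a b) = (a + b)%N.
Proof.
rewrite mdegE (bigD1 i0) //= (bigD1 i1) //= big1 ?vec2_0 ?vec2_1 ?addn0 //.
by move=> j /andP [h1 h0]; rewrite vec2_o.
Qed.

Lemma le_vec2 a b m : (vec2 a b <= m)%MM <-> (a <= m i0 /\ b <= m i1)%N.
Proof.
split.
- by move/mnm_lepP => h; have := h i0; have := h i1; rewrite vec2_0 vec2_1.
- move=> [h0 h1]; apply/mnm_lepP => j.
  case: (eqVneq j i0) => [->|n0]; first by rewrite vec2_0.
  case: (eqVneq j i1) => [->|n1]; first by rewrite vec2_1.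
  by rewrite vec2_o.
Qed.

Lemma dec2 (b c : mon) x y : (b + c)%MM = vec2 x y ->
  b = vec2 (b i0) (b i1) /\ c = vec2 (c i0) (c i1) /\ (b i0 + c i0 = x)%N /\ (b i1 + c i1 = y)%N.
Proof.
move=> E; have E' := fun j => f_equal (fun m : mon => m j) E; simpl in E'.
have H0 := E' i0; have H1 := E' i1; rewrite mnmDE in H0; rewrite mnmDE in H1.
rewrite vec2_0 in H0; rewrite vec2_1 in H1.
split; [|split; [|split; [exact: H0|exact: H1]]]; apply/mnmP => j; rewrite mnmE;
  case: (eqVneq j i0) => [->//|n0]; case: (eqVneq j i1) => [->//|n1];
  have := E' j; rewrite mnmDE vec2_o //; lia.
Qed.

Lemma mon_eq0 (b : mon) : b = vec2 (b i0) (b i1) -> b <> 0%MM -> (1 <= b i0 + b i1)%N.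
Proof.
move=> E nz; case: (posnP (b i0 + b i1)) => // h.
exfalso; apply: nz; have e0 : b i0 = 0%N by lia.
have e1 : b i1 = 0%N by lia.
by rewrite E e0 e1 vec2_00.
Qed.


Lemma lem_i (m m' : mon) i : (m <= m')%MM -> (m i <= m' i)%N.
Proof. by move/mnm_lepP. Qed.

Lemma dec_sum (x y : mon) j : ((x + y)%MM j = x j + y j)%N.
Proof. exact: mnmDE. Qed.

Definition Mk k : mon -> Prop := fun x => (k <= x i0 + x i1)%N.

Lemma upset_Mk k : upset (Mk k).
Proof.
split; last by exists (vec2 k 0); rewrite /Mk vec2_0 vec2_1 addn0.
move=> m m' h le; have := lem_i i0 le; have := lem_i i1 le; rewrite /Mk in h *; lia.
Qed.

Lemma split_le (m v : mon) : (v <= m)%MM -> m = (v + (m - v))%MM.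
Proof. by move=> le; rewrite addmC submK. Qed.

Lemma Mk_sum a b m : sumset (Mk a) (Mk b) m <-> Mk (a + b) m.
Proof.
split.
- move=> [x [y [hx [hy ->]]]]; rewrite /Mk !dec_sum; rewrite /Mk in hx hy; lia.
- rewrite /Mk => h; set t := minn (m i0) a.
  have le : (vec2 t (a - t) <= m)%MM by apply/le_vec2; split; rewrite /t; lia.
  exists (vec2 t (a - t)), (m - vec2 t (a - t))%MM; split.
    by rewrite /Mk vec2_0 vec2_1; lia.
  split; last exact: split_le.
  by rewrite /Mk !mnmBE vec2_0 vec2_1; rewrite /t; lia.
Qed.

Definition Mi k := mkg (Mk k).

Lemma UI_Mi k m : UI (Mi k) m <-> Mk k m.
Proof. exact: (UI_mk (upset_Mk k)). Qed.

Lemma Mi_add a b : mul (Mi a) (Mi b) = Mi (a + b).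
Proof.
apply: MonR_eq => m; rewrite UI_mul UI_Mi -Mk_sum; split;
  move=> [x [y [hx [hy ->]]]]; exists x, y; rewrite ?UI_Mi in hx hy *; done.
Qed.

Lemma Mi0 : Mi 0 = one.
Proof. by apply: MonR_eq => m; rewrite UI_Mi; split => // _; rewrite /Mk. Qed.

Lemma ideal_XY_eq : ideal_XY K N = Mi 1.
Proof.
pose SX : mon -> Prop := fun s => exists i : 'I_N, (val i < 2)%N /\ s = U_(i)%MM.
have E : (fun p : poly => exists i : 'I_N, (val i < 2)%N /\ p = 'X_i) = genX SX.
  apply: functional_extensionality => p; apply: propositional_extensionality; split.
  - by move=> [i [hi ->]]; exists U_(i)%MM; split => //; exists i.
  - by move=> [s [[i [hi ->]] ->]]; exists i.
rewrite /ideal_XY E -/(mkg _); apply: MonR_eq => m; rewrite UI_Mi UI_mkg; last first.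
  by exists U_(i0)%MM, i0.
rewrite /Mk; split.
- move=> [s [[i [hi ->]] le]]; move: le; rewrite lep1mP.
  have [e|e] : i = i0 \/ i = i1.
    case: i hi => [[|[|k]] hk] hi; [left|right|by []]; exact: val_inj.
  + by subst; lia.
  + by subst; lia.
- move=> h; case: (posnP (m i0)) => h0.
  + exists U_(i1)%MM; split; first by exists i1.
    by rewrite lep1mP; lia.
  + exists U_(i0)%MM; split; first by exists i0.
    by rewrite lep1mP; lia.
Qed.

Lemma a_k_eq k : a_k K N k = Mi k.
Proof.
elim: k => [|k IH]; first by rewrite Mi0.
rewrite /a_k /mpow iterS -/(mpow _ _ _ k) -/(a_k K N k) IH ideal_XY_eq Mi_add.
by rewrite add1n.
Qed.


Definition An n : mon -> Prop := fun x => (n <= x i0 \/ n <= x i1)%N.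

Lemma upset_An n : upset (An n).
Proof.
split; last by exists (vec2 n 0); left; rewrite vec2_0.
move=> m m' h le; have := lem_i i0 le; have := lem_i i1 le; rewrite /An in h *; lia.
Qed.

Definition Ai n := mkg (An n).

Lemma UI_Ai n m : UI (Ai n) m <-> An n m.
Proof. exact: (UI_mk (upset_An n)). Qed.

Lemma Ai_mul n : mul (Ai n.+1) (Mi n) = Mi (n + n.+1).
Proof.
apply: MonR_eq => m; rewrite UI_mul UI_Mi; split.
- move=> [x [y [/UI_Ai hx [/UI_Mi hy ->]]]]; rewrite /Mk !dec_sum.
  rewrite /An /Mk in hx hy; lia.
- rewrite /Mk => h.
  case: (leqP n.+1 (m i0)) => h0.
  + have le : (vec2 n.+1 0 <= m)%MM by apply/le_vec2; split; lia.
    exists (vec2 n.+1 0), (m - vec2 n.+1 0)%MM; split.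
      by apply/UI_Ai; left; rewrite vec2_0.
    split; last exact: split_le.
    by apply/UI_Mi; rewrite /Mk !mnmBE vec2_0 vec2_1; lia.
  + have le : (vec2 0 n.+1 <= m)%MM by apply/le_vec2; split; lia.
    exists (vec2 0 n.+1), (m - vec2 0 n.+1)%MM; split.
      by apply/UI_Ai; right; rewrite vec2_1.
    split; last exact: split_le.
    by apply/UI_Mi; rewrite /Mk !mnmBE vec2_0 vec2_1; lia.
Qed.

Lemma dec_nonunit (b c : M) x y : UI (mul b c) (vec2 x y) -> ~ UI b 0%MM -> ~ UI c 0%MM ->
  exists mb mc, UI b (vec2 (mb i0) (mb i1)) /\ UI c (vec2 (mc i0) (mc i1)) /\
    (mb i0 + mc i0 = x)%N /\ (mb i1 + mc i1 = y)%N /\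
    (1 <= mb i0 + mb i1)%N /\ (1 <= mc i0 + mc i1)%N.
Proof.
move=> /UI_mul [mb [mc [Hb [Hc E]]]] nb nc.
have [eb [ec [e0 e1]]] := dec2 (esym E).
exists mb, mc; rewrite -eb -ec; do 5 split => //.
  by apply: mon_eq0 eb _ => h; subst; apply: nb.
by apply: mon_eq0 ec _ => h; subst; apply: nc.
Qed.

Lemma atom_crit (A : M) : ~ UI A 0%MM ->
  (forall b c, A = mul b c -> ~ UI b 0%MM -> ~ UI c 0%MM -> False) -> is_atom mul one A.
Proof.
move=> nu H; split; first by move/unit_iff.
move=> b c E; case: (classic (UI b 0%MM)) => hb; first by left; apply/unit_iff.
case: (classic (UI c 0%MM)) => hc; first by right; apply/unit_iff.
by exfalso; exact: H E hb hc.
Qed.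

Lemma Ai_atom n : (1 <= n)%N -> is_atom mul one (Ai n).
Proof.
move=> n1; apply: atom_crit.
  by rewrite UI_Ai /An !mnm0E; lia.
move=> b c E nb nc.
have h1 : UI (mul b c) (vec2 n 0) by rewrite -E UI_Ai; left; rewrite vec2_0.
have h2 : UI (mul b c) (vec2 0 n) by rewrite -E UI_Ai; right; rewrite vec2_1.
have [mb [mc [Hb [Hc [e0 [e1 [p1 p2]]]]]]] := dec_nonunit h1 nb nc.
have [mb' [mc' [Hb' [Hc' [e0' [e1' [p1' p2']]]]]]] := dec_nonunit h2 nb nc.
have : UI (mul b c) (vec2 (mb i0) (mc' i1)).
  apply/UI_mul; exists (vec2 (mb i0) (mb i1)), (vec2 (mc' i0) (mc' i1)); do 2 split => //.
  rewrite vec2_add; congr vec2; lia.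
rewrite -E UI_Ai /An vec2_0 vec2_1; lia.
Qed.


Definition Q (d i : nat) : Prop :=
  (i <= d)%N /\ (i = 0%N \/ (i = 1%N /\ d <> 2%N) \/ (i %% 2 = d %% 2)%N).

Definition Dd d : mon -> Prop := fun x => exists i, Q d i /\ (i <= x i0)%N /\ (d - i <= x i1)%N.

Lemma upset_Dd d : upset (Dd d).
Proof.
split; last by exists (vec2 0 d), 0%N; rewrite /Q vec2_0 vec2_1; split; [lia|split; lia].
move=> m m' [i [hQ [h0 h1]]] le; exists i; split => //.
have := lem_i i0 le; have := lem_i i1 le; lia.
Qed.

Definition Di d := mkg (Dd d).

Lemma UI_Di d m : UI (Di d) m <-> Dd d m.
Proof. exact: (UI_mk (upset_Dd d)). Qed.

Lemma Di_mul d : mul (Mi 1) (Di d) = Mi d.+1.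
Proof.
apply: MonR_eq => m; rewrite UI_mul UI_Mi; split.
- move=> [x [y [/UI_Mi hx [/UI_Di [i [[hi _] [h0 h1]]] ->]]]]; rewrite /Mk !dec_sum.
  rewrite /Mk in hx; lia.
- rewrite /Mk => h.
  have [i [hQ [h0 h1]]] : exists i, Q d i /\ (i <= m i0)%N /\ (d - i <= m i1)%N.
    set t := minn (m i0) d.
    case: (classic (Q d t)) => hQ.
      by exists t; split => //; rewrite /t; lia.
    exists t.-1; rewrite /Q in hQ *; rewrite /t in hQ *; split; lia.
  have le : (vec2 i (d - i) <= m)%MM by apply/le_vec2.
  exists (m - vec2 i (d - i))%MM, (vec2 i (d - i)); split.
    by apply/UI_Mi; rewrite /Mk !mnmBE vec2_0 vec2_1; case: hQ => hQ _; lia.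
  split; first by apply/UI_Di; exists i; rewrite vec2_0 vec2_1.
  by rewrite addmC -split_le.
Qed.


Lemma Dd_F1 d x : Dd d x -> (d <= x i0 + x i1)%N.
Proof. by move=> [i [[hi _] [h0 h1]]]; lia. Qed.

Lemma Dd_F2 d x : Dd d x -> (x i0 + x i1 = d)%N -> Q d (x i0).
Proof.
move=> [i [hQ [h0 h1]]] e; have hi := proj1 hQ.
by have -> : x i0 = i by lia.
Qed.

Lemma sum_in (b c : M) a1 b1 a2 b2 : UI b (vec2 a1 b1) -> UI c (vec2 a2 b2) ->
  UI (mul b c) (vec2 (a1 + a2) (b1 + b2)).
Proof. by move=> h1 h2; apply/UI_mul; exists (vec2 a1 b1), (vec2 a2 b2); rewrite vec2_add. Qed.

Lemma Di_atom d : (1 <= d)%N -> is_atom mul one (Di d).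
Proof.
move=> d1; apply: atom_crit.
  by move/UI_Di/Dd_F1; rewrite !mnm0E; lia.
move=> b c E nb nc.
have inD : forall a1 b1, UI (mul b c) (vec2 a1 b1) -> Dd d (vec2 a1 b1).
  by move=> a1 b1; rewrite -E UI_Di.
have F1 : forall a1 b1, UI (mul b c) (vec2 a1 b1) -> (d <= a1 + b1)%N.
  by move=> a1 b1 /inD /Dd_F1; rewrite vec2_0 vec2_1.
have F2 : forall a1 b1, UI (mul b c) (vec2 a1 b1) -> (a1 + b1 = d)%N -> Q d a1.
  by move=> a1 b1 /inD /Dd_F2; rewrite vec2_0 vec2_1 => h /h.
have h1 : UI (mul b c) (vec2 0 d) by rewrite -E UI_Di; exists 0%N; rewrite vec2_0 vec2_1 /Q; split; lia.
have h2 : UI (mul b c) (vec2 d 0) by rewrite -E UI_Di; exists d; rewrite vec2_0 vec2_1 /Q; split; lia.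
have [mb [mc [Hb [Hc [e0 [e1 [p1 p2]]]]]]] := dec_nonunit h1 nb nc.
have [nb' [nc' [Hb' [Hc' [e0' [e1' [p1' p2']]]]]]] := dec_nonunit h2 nb nc.
have X1 := sum_in Hb Hc'; have X2 := sum_in Hb' Hc.
have f1 := F1 _ _ X1; have f2 := F1 _ _ X2.
have q1 := F2 _ _ X1 ltac:(lia); have q2 := F2 _ _ X2 ltac:(lia).
case: (eqVneq d 2) => [d2|dn2].
  subst d; rewrite /Q in q1 q2; lia.
have h3 : UI (mul b c) (vec2 1 (d - 1)).
  by rewrite -E UI_Di; exists 1%N; rewrite vec2_0 vec2_1 /Q; split; [lia|split; lia].
have [pb [pc [Hpb [Hpc [e0'' [e1'' [p1'' p2'']]]]]]] := dec_nonunit h3 nb nc.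
have X3 := sum_in Hpb Hc'; have X4 := sum_in Hb Hpc.
have X5 := sum_in Hb' Hpc; have X6 := sum_in Hpb Hc.
have f3 := F1 _ _ X3; have f4 := F1 _ _ X4; have f5 := F1 _ _ X5; have f6 := F1 _ _ X6.
case: (eqVneq (pb i0) 1) => hp.
- have q3 := F2 _ _ X3 ltac:(lia).
  rewrite /Q in q1 q2 q3; lia.
- have q5 := F2 _ _ X5 ltac:(lia).
  rewrite /Q in q1 q2 q5; lia.
Qed.


Lemma Mi1_atom : is_atom mul one (Mi 1).
Proof.
apply: (@atom_deg1 _ (vec2 1 0)).
- by rewrite UI_Mi /Mk !mnm0E.
- by rewrite UI_Mi /Mk vec2_0 vec2_1.
- by rewrite mdeg_vec2.
Qed.

Lemma mprod_nseq j : mprodM (nseq j (Mi 1)) = Mi j.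
Proof. by elim: j => [|j IH] /=; [rewrite Mi0|rewrite IH Mi_add add1n]. Qed.

Lemma Lset_ge2 (A : M) k m : Lset mul one A k -> (2 <= k)%N -> Lset mul one A m -> (2 <= m)%N.
Proof.
move=> [s [<- [Hs E]]] k2 [t [<- [Ht Et]]].
case: s Hs E k2 => [|x [|y s]] // Hs E _.
have nx := atom_nonunit (Hs x (or_introl erefl)).
have ny : ~ UI (mprodM (y :: s)) 0%MM.
  apply: mprod_nonunit => // z hz; apply: atom_nonunit; apply: Hs; by right.
case: t Ht Et => [|z [|w t]] // Ht Et.
- have hA : UI A 0%MM by rewrite Et.
  by move: hA; rewrite E /= => /UI_mul0 [].
- have [_ hz] := Ht z (or_introl erefl).
  move: Et; rewrite /= mul1r E /= => Ez.
  by case: (hz _ _ (esym Ez)) => /unit_iff.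
Qed.

Lemma In_nseq (T : Type) j (x y : T) : List.In x (nseq j y) -> x = y.
Proof. by elim: j => [|j IH] //= [->|/IH]. Qed.

Lemma L_Mi k m : (2 <= m <= k)%N -> Lset mul one (Mi k) m.
Proof.
move=> /andP [m2 mk].
exists (Mi 1 :: Di (k - m + 1) :: nseq (m - 2) (Mi 1)); split.
  by rewrite /= size_nseq; lia.
split.
- move=> x [<-|[<-|hx]]; first exact: Mi1_atom.
  + by apply: Di_atom; lia.
  + by rewrite (In_nseq hx); exact: Mi1_atom.
- rewrite /= mprod_nseq mulA Di_mul Mi_add; congr Mi; lia.
Qed.

Lemma L_ak k m : (2 <= k)%N -> Lset mul one (a_k K N k) m <-> (2 <= m <= k)%N.
Proof.
move=> k2; rewrite a_k_eq; split; last exact: L_Mi.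
move=> h; apply/andP; split.
  by apply: (Lset_ge2 (L_Mi (k := k) (m := k) _)) => //; rewrite k2 leqnn.
case: h => s [<- [Hs E]].
have : UI (mprodM s) (vec2 k 0) by rewrite -E UI_Mi /Mk vec2_0 vec2_1 addn0.
move/(mprod_deg (fun x hx => atom_nonunit (Hs x hx))); by rewrite mdeg_vec2 addn0.
Qed.

Lemma U_part k : (2 <= k)%N -> forall m, Uset mul one k m <-> (2 <= m)%N.
Proof.
move=> k2 m; split.
- by move=> [a [ha hm]]; exact: Lset_ge2 ha k2 hm.
- move=> m2; exists (a_k K N (maxn k m)); split; (apply/L_ak; first by rewrite leq_max k2);
    apply/andP; split => //; [exact: leq_maxl|exact: leq_maxr].
Qed.


Lemma not_TK : ~ transfer_Krull mul one.
Proof.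
move=> [T' [op' [e' [th [[[assoc [comm lunit]] [canc _]] [he [hm [_ [hu hl]]]]]]]]].
have E : mul (Mi 1) (Ai 2) = mul (Mi 1) (mul (Mi 1) (Mi 1)).
  by rewrite mulC (Ai_mul 1) !Mi_add.
have E2 : th (Ai 2) = op' (th (Mi 1)) (th (Mi 1)).
  by apply: (canc (th (Mi 1))); rewrite -!hm E.
have [b [c [Ebc [[u [hu1 hb]] [u' [hu2 hc]]]]]] := hl _ _ _ E2.
have at2 := Ai_atom (isT : (1 <= 2)%N).
have nM : ~ is_unit op' e' (th (Mi 1)).
  by move/hu/unit_iff; apply: atom_nonunit; exact: Mi1_atom.
case: (proj2 at2 _ _ Ebc) => [[v hv]|[v hv]]; apply: nM.
- have := f_equal th hv; rewrite hm hb he -assoc => h.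
  by exists (op' u (th v)).
- have := f_equal th hv; rewrite hm hc he -assoc => h.
  by exists (op' u' (th v)).
Qed.

Lemma no_inj_list (T : Type) (E : list T) (f : nat -> T) :
  injective f -> (forall n, List.In (f n) E) -> False.
Proof.
elim: E f => [|x E IH] f finj fin; first exact: (fin 0%N).
case: (classic (exists n0, f n0 = x)) => [[n0 hn0]|hno].
- pose g n := f (if (n < n0)%N then n else n.+1).
  apply: (IH g).
    move=> a b /finj; rewrite /g; case: ifP; case: ifP; lia.
  move=> n; case: (fin (if (n < n0)%N then n else n.+1)) => // h.
  exfalso; have := finj _ _ (etrans hn0 h); case: ifP; lia.
- apply: (IH f) => // n; case: (fin n) => // h.
  by exfalso; apply: hno; exists n.
Qed.

Lemma atom_in_prod (x : M) (l : seq M) : is_atom mul one x -> x = mprodM l -> List.In x l.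
Proof.
move=> ax; elim: l => [|y l IH] /= E.
  by apply: (atom_nonunit ax); rewrite E.
case: (proj2 ax _ _ E) => /unit_iff /UI0_one h.
- by right; apply: IH; rewrite E h mul1.
- by left; rewrite E h mul1r.
Qed.

Lemma not_LFG : ~ loc_fin_gen mul one.
Proof.
move=> H; have [E [_ Hgen]] := H (Mi 1).
have inS : forall n, dc_gen mul one (Mi 1) (Ai n.+1).
  move=> n S [S1 SM] Sdc Sa.
  have Sj : forall j, S (Mi j).
    by elim=> [|j IH]; [rewrite Mi0|rewrite -add1n -Mi_add; exact: SM].
  apply: (Sdc (Mi (n + n.+1)) _ (Mi n)) => //; by rewrite Ai_mul.
apply: (@no_inj_list _ E (fun n => Ai n.+1)).
  move=> a b e.
  have h1 : UI (Ai a.+1) (vec2 a.+1 0) by rewrite UI_Ai; left; rewrite vec2_0.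
  have h2 : UI (Ai b.+1) (vec2 b.+1 0) by rewrite UI_Ai; left; rewrite vec2_0.
  rewrite e UI_Ai /An vec2_0 vec2_1 in h1; rewrite -e UI_Ai /An vec2_0 vec2_1 in h2.
  lia.
move=> n; have [u [l [_ [[v [_ huv]] [Hl Eu]]]]] := Hgen _ (inS n).
have u1 : u = one.
  by apply: UI0_one; apply/unit_iff; exists v.
rewrite u1 mul1 in Eu.
apply: Hl; apply: atom_in_prod Eu; apply: Ai_atom; lia.
Qed.


Definition Pset : mon -> Prop := fun x => (1 <= x i0)%N.

Lemma upset_P : upset Pset.
Proof.
split; last by exists (vec2 1 0); rewrite /Pset vec2_0.
move=> m m' h le; have := lem_i i0 le; rewrite /Pset in h *; lia.
Qed.

Definition Pi := mkg Pset.

Lemma UI_Pi m : UI Pi m <-> (1 <= m i0)%N.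
Proof. exact: (UI_mk upset_P). Qed.

Lemma Pi_atom : is_atom mul one Pi.
Proof.
apply: (@atom_deg1 _ (vec2 1 0)).
- by rewrite UI_Pi !mnm0E.
- by rewrite UI_Pi vec2_0.
- by rewrite mdeg_vec2.
Qed.

Lemma e0_le (m : mon) : (1 <= m i0)%N -> (vec2 1 0 <= m)%MM.
Proof. by move=> h; apply/le_vec2; split. Qed.

Lemma UI_Pmul (Y : M) m : UI (mul Pi Y) m <-> (1 <= m i0)%N /\ UI Y (m - vec2 1 0)%MM.
Proof.
rewrite UI_mul; split.
- move=> [p [y [/UI_Pi hp [hy ->]]]]; split; first by rewrite dec_sum; lia.
  apply: UI_up hy _; apply/mnm_lepP => j; rewrite mnmBE mnmDE.
  case: (eqVneq j i0) => [->|n0]; first by rewrite vec2_0; lia.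
  case: (eqVneq j i1) => [->|n1]; first by rewrite vec2_1; lia.
  rewrite vec2_o //; lia.
- move=> [h hy]; exists (vec2 1 0), (m - vec2 1 0)%MM; split; first by rewrite UI_Pi vec2_0.
  by split => //; apply: split_le; apply: e0_le.
Qed.

Lemma Pi_cancel (A B : M) : mul Pi A = mul Pi B -> A = B.
Proof.
move=> E; apply: MonR_eq => m.
have h : forall C : M, UI C m <-> UI (mul Pi C) (m + vec2 1 0)%MM.
  move=> C; rewrite UI_Pmul addmK dec_sum vec2_0; split => [h|[]] //; split => //; lia.
by rewrite !h E.
Qed.

Lemma atom_P (x : M) : is_atom mul one x -> (forall m, UI x m -> (1 <= m i0)%N) -> x = Pi.
Proof.
move=> ax hx.
pose U : mon -> Prop := fun m => UI x (m + vec2 1 0)%MM.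
have uU : upset U.
  split.
  - move=> m m' h le; apply: UI_up h _; apply/mnm_lepP => j; rewrite !mnmDE.
    have := lem_i j le; lia.
  - have [m hm] := UI_ne x; exists (m - vec2 1 0)%MM; rewrite /U addmC -split_le //.
    exact: e0_le (hx _ hm).
have E : x = mul Pi (mkg U).
  apply: MonR_eq => m; rewrite UI_Pmul UI_mk //; rewrite /U; split.
  - move=> h; split; first exact: hx h.
    by rewrite addmC -split_le //; apply: e0_le (hx _ h).
  - by move=> [h1]; rewrite addmC -split_le //; apply: e0_le.
case: (proj2 ax _ _ E) => /unit_iff.
- by move/UI_Pi; rewrite mnm0E.
- by move/UI0_one => e; rewrite E e mul1r.
Qed.

Lemma vec2_sub a b c d : (vec2 a b - vec2 c d)%MM = vec2 (a - c) (b - d).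
Proof.
apply/mnmP => j; rewrite mnmBE !mnmE.
by case: (j == i0); case: (j == i1).
Qed.

Lemma UI_Ppow j (Y : M) m :
  UI (iter j (mul Pi) Y) m <-> (j <= m i0)%N /\ UI Y (m - vec2 j 0)%MM.
Proof.
elim: j m => [|j IH] m; rewrite /=.
  by rewrite vec2_00 subm0; split => // [[]].
rewrite UI_Pmul IH submDA vec2_add mnmBE vec2_0 add1n; split.
- by move=> [h1 [h2 h3]]; split => //; lia.
- by move=> [h1 h2]; split; [lia|split => //; lia].
Qed.

Lemma mprod_Pnseq j t : mprodM (nseq j Pi ++ t) = iter j (mul Pi) (mprodM t).
Proof. by elim: j => [|j IH] //=; rewrite IH. Qed.

Lemma Z_prod (s : seq M) : (forall u, List.In u s -> exists m, UI u m /\ m i0 = 0%N) ->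
  exists m, UI (mprodM s) m /\ m i0 = 0%N.
Proof.
elim: s => [|u s IH] H /=; first by exists 0%MM; rewrite mnm0E.
have [a [ha ea]] := H u (or_introl erefl).
have [b [hb eb]] := IH (fun v hv => H v (or_intror hv)).
exists (a + b)%MM; split; last by rewrite dec_sum ea eb.
by apply/UI_mul; exists a, b.
Qed.

Lemma mprod_mid (s1 s2 : seq M) x : mprodM (s1 ++ x :: s2) = mul x (mprodM (s1 ++ s2)).
Proof.
rewrite !mprod_cat /= mulA (mulC (mprodM s1) x) -mulA //.
Qed.

Lemma PM_lower k : (2 <= k)%N -> forall j (s : seq M), (forall x, List.In x s -> is_atom mul one x) ->
  mprodM s = iter j (mul Pi) (Mi k) -> (j + 2 <= size s)%N.
Proof.
move=> k2; elim=> [|j IH] s Hs E.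
  have L1 : Lset mul one (Mi k) (size s) by exists s; split => //; split => //; rewrite E.
  have L2 : Lset mul one (Mi k) k by apply: L_Mi; rewrite k2 leqnn.
  exact: (Lset_ge2 L2 k2 L1).
have [u [us nZ]] : exists u, List.In u s /\ forall m, UI u m -> (1 <= m i0)%N.
  apply: NNPP => H.
  have : exists m, UI (mprodM s) m /\ m i0 = 0%N.
    apply: Z_prod => u hu; apply: NNPP => H2; apply: H; exists u; split => // m hm.
    case: (posnP (m i0)) => // h0; exfalso; apply: H2; by exists m.
  move=> [m [hm e]]; move: hm; rewrite E /= UI_Pmul e; by case.
have eu := atom_P (Hs u us) nZ; subst u.
have [s1 [s2 es]] := List.in_split _ _ us; subst s.
move: E; rewrite mprod_mid /= => /Pi_cancel E.
have Hs' : forall x, List.In x (s1 ++ s2) -> is_atom mul one x.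
  move=> x hx; apply: Hs; apply: List.in_or_app.
  by case: (List.in_app_or _ _ _ hx); [left|right; right].
have := IH (s1 ++ s2) Hs' E.
rewrite !size_cat /=; lia.
Qed.


Lemma Lset_Pmul j k l : Lset mul one (Mi k) l -> Lset mul one (iter j (mul Pi) (Mi k)) (j + l).
Proof.
move=> [t [<- [Ht Et]]]; exists (nseq j Pi ++ t); split; first by rewrite size_cat size_nseq.
split; last by rewrite mprod_Pnseq Et.
move=> x hx; case: (List.in_app_or _ _ _ hx) => [hx1|/Ht //]; rewrite (In_nseq hx1); exact: Pi_atom.
Qed.

Lemma PM_rho k j : (2 <= k)%N ->
  rhoL mul one (iter j (mul Pi) (Mi k)) (rho_of (j + 2) (j + k)).
Proof.
move=> k2; exists (j + 2)%N, (j + k)%N; split.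
  by apply: Lset_Pmul; apply: L_Mi; rewrite leqnn k2.
split; first by move=> l [s [<- [Hs E]]]; exact: PM_lower k2 j s Hs (esym E).
split; first by apply: Lset_Pmul; apply: L_Mi; rewrite leqnn k2.
split => // l [s [<- [Hs E]]].
have : UI (mprodM s) (vec2 (j + k) 0).
  rewrite -E UI_Ppow vec2_sub; split; first by rewrite vec2_0; lia.
  by rewrite UI_Mi /Mk vec2_0 vec2_1; lia.
move/(mprod_deg (fun x hx => atom_nonunit (Hs x hx))); by rewrite mdeg_vec2 addn0.
Qed.

End Bridge.

Import Order.TTheory Num.Theory.
Local Open Scope ring_scope.

Lemma rat_nat (q : rat) : (1 < q)%R -> exists r s : nat, (0 < s)%N /\ (s < r)%N /\ q = (r%:R / s%:R)%R.
Proof.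
move=> q1.
have q0 : (0 < q)%R by apply: lt_trans q1.
have hn : (0 < numq q)%R by rewrite numq_gt0.
have hd := denq_gt0 q.
have [r er] : exists r : nat, numq q = r%:Z by exists `|numq q|%N; rewrite gez0_abs // ltW.
have [s es] : exists s : nat, denq q = s%:Z by exists `|denq q|%N; rewrite gez0_abs // ltW.
have eq : q = (r%:R / s%:R)%R by rewrite -{1}(divq_num_den q) er es.
have s0 : (0 < s)%N by rewrite -ltz_nat -es.
exists r, s; split => //; split => //.
move: q1; rewrite eq ltr_pdivlMr ?ltr0n // GRing.mul1r ltr_nat //.
Qed.

Lemma rho_eq (r s : nat) : (0 < s)%N -> (r%:R / s%:R : rat)%R = rho_of (2 * s) (2 * r).
Proof.
move=> s0; rewrite /rho_of; have -> : (2 * s == 0)%N = false by lia.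
rewrite !natrM invfM mulrACA mulfV ?GRing.mul1r //.
Qed.

Lemma FE (K : fieldType) (N : nat) (hN : (2 <= N)%N) : fully_elastic (@mon_mul K N) (mon_one K N).
Proof.
move=> q q1 _; have [r [s [s0 [sr ->]]]] := rat_nat q1.
exists (iter (2 * s - 2) (mon_mul (@Pi K N hN)) (@Mi K N hN (2 * r - 2 * s + 2))).
have := @PM_rho K N hN ((2 * r - 2 * s + 2)%N) (2 * s - 2) ltac:(lia).
rewrite rho_eq //.
have -> : (2 * s - 2 + 2 = 2 * s)%N by lia.
by have -> : (2 * s - 2 + (2 * r - 2 * s + 2) = 2 * r)%N by lia.
Qed.

Theorem theorem4p5 (K : fieldType) (N : nat) (hN : (2 <= N)%N) :
  BF_monoid (@mon_mul K N) (mon_one K N) /\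
  (~ loc_fin_gen (@mon_mul K N) (mon_one K N) /\
   ~ transfer_Krull (@mon_mul K N) (mon_one K N)) /\
  (forall k : nat, (2 <= k)%N ->
     forall m : nat, Uset (@mon_mul K N) (mon_one K N) k m <-> (2 <= m)%N) /\
  (forall k : nat, (2 <= k)%N ->
     forall m : nat, Lset (@mon_mul K N) (mon_one K N) (a_k K N k) m <-> (2 <= m <= k)%N) /\
  fully_elastic (@mon_mul K N) (mon_one K N).
Proof.
split; first exact: (@BF K N).
split; first by split; [exact: (@not_LFG K N hN)|exact: (@not_TK K N hN)].
split; first exact: (@U_part K N hN).
split; first by move=> k k2 m; exact: (@L_ak K N hN k m k2).
exact: FE hN.
Qed.
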